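(* Let $t<1$. There exists a positive integer $N$, depending only on $t$, such that for every integer $n\ge N$ there exists an analytic function $f_n(z)=\sum_{k\ge 1} b_k z^k$ on $\mathbb{D}$ with non-negative Taylor coefficients, $f_n(0)=0$ and $\|f_n\|_{\mathcal{B}}\le 1$, satisfying $$ \mathcal{F}^t_n(f_n)=\sum_{k=1}^n k^t|b_k|^2 > n^t B_n^2. $$
   Context: $\mathbb{D}$ is the open unit disc. The Bloch space $\mathcal{B}$ consists of analytic functions $f$ on $\mathbb{D}$ with finite norm $\|f\|_{\mathcal{B}}=|f(0)|+\sup_{z\in\mathbb{D}}(1-|z|^2)|f'(z)|$. For $n\ge 2$, $B_n=\frac{n+1}{2n}\left(\frac{n+1}{n-1}\right)^{(n-1)/2}$. *)

(* Defs.v *)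
From Stdlib Require Import Reals.
From Coquelicot Require Import Coquelicot.
Open Scope R_scope.

Definition in_disc (z : C) : Prop := Cmod z < 1.

Definition analytic_on_disc (f : C -> C) : Prop :=
  forall z : C, in_disc z -> @ex_derive C_AbsRing C_NormedModule f z.

Definition has_taylor_coeffs (f : C -> C) (b : nat -> R) : Prop :=
  forall z : C, in_disc z ->
    @is_series C_AbsRing C_NormedModule
      (fun k => Cmult (RtoC (b k)) (@pow_n C_Ring z k)) (f z).

Definition bloch_norm (f : C -> C) : Rbar :=
  Rbar_plus (Finite (Cmod (f 0%C)))
    (Lub_Rbar (fun r => exists (z d : C), in_disc z /\
        @is_derive C_AbsRing C_NormedModule f z d /\
        r = (1 - Cmod z ^ 2) * Cmod d)).

Definition B_const (n : nat) : R :=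
  (INR n + 1) / (2 * INR n) *
  Rpower ((INR n + 1) / (INR n - 1)) ((INR n - 1) / 2).

Definition F_tn (t : R) (n : nat) (b : nat -> R) : R :=
  sum_f 1 n (fun k => Rpower (INR k) t * (Rabs (b k)) ^ 2).

(* Main.v *)
Require Import Defs.
From Stdlib Require Import Reals Lra Lia.
From Coquelicot Require Import Coquelicot.
Open Scope R_scope.

Lemma ln_le_sub1 (u : R) : 0 < u -> ln u <= u - 1.
Proof. intros Hu. pose proof (exp_ineq1_le (ln u)). rewrite exp_ln in H; lra. Qed.

Lemma exp_le_mono (x y : R) : x <= y -> exp x <= exp y.
Proof. intros [H|H]; [left; apply exp_increasing; exact H| rewrite H; lra]. Qed.

Lemma key_h (n : nat) (r : R) : (2 <= n)%nat -> 0 <= r < 1 ->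
  B_const n * INR n * (1 - r ^ 2) * r ^ (n - 1) <= 1.
Proof.
  intros Hn [Hr0 Hr1].
  assert (HN : 2 <= INR n) by (replace 2 with (INR 2) by (simpl; lra); apply le_INR; lia).
  destruct (Req_dec r 0) as [Hr|Hr]; [subst r|].
  { rewrite (pow_i (n-1)) by lia. rewrite Rmult_0_r; lra. }
  assert (Hrp : 0 < r) by lra.
  set (N := INR n) in *.
  set (s := r ^ 2).
  assert (Hs0 : 0 < s) by (unfold s; apply pow_lt; lra).
  assert (Hs1 : s < 1) by (unfold s; nra).
  set (p := (N - 1) / 2).
  set (y := (N + 1) / (N - 1)).
  assert (Hy : 0 < y) by (unfold y; apply Rdiv_lt_0_compat; lra).
  assert (Hpow : r ^ (n - 1) = Rpower s p).
  { unfold s. rewrite <- (Rpower_pow 2 r Hrp), Rpower_mult.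
    rewrite <- Rpower_pow by lra. f_equal. rewrite minus_INR by lia. unfold p, N. simpl. lra. }
  rewrite Hpow. unfold B_const. fold N. fold y. fold p.
  set (A := (N + 1) / 2 * (1 - s)).
  assert (HA : 0 < A) by (unfold A; apply Rmult_lt_0_compat; lra).
  replace ((N + 1) / (2 * N) * Rpower y p * N * (1 - s) * Rpower s p)
    with (A * (Rpower y p * Rpower s p)) by (unfold A; field; lra).
  unfold Rpower. rewrite <- exp_plus, <- (exp_ln A HA), <- exp_plus.
  rewrite <- exp_0. apply exp_le_mono.
  pose proof (ln_le_sub1 A HA). pose proof (ln_le_sub1 (y * s)) as Hys.
  rewrite ln_mult in Hys by lra.
  assert (Hys' : ln y + ln s <= y * s - 1) by (apply Hys; apply Rmult_lt_0_compat; lra).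
  assert (Hp : 0 <= p) by (unfold p; lra).
  assert (p * (ln y + ln s) <= p * (y * s - 1)) by (apply Rmult_le_compat_l; lra).
  assert (E : A - 1 + p * (y * s - 1) = 0) by (unfold A, p, y; field; lra).
  lra.
Qed.

Lemma B_bounds (n : nat) : (2 <= n)%nat -> 0 < B_const n <= 3.
Proof.
  intros Hn.
  assert (HN : 2 <= INR n) by (replace 2 with (INR 2) by (simpl; lra); apply le_INR; lia).
  unfold B_const. set (N := INR n) in *.
  assert (H1 : 0 < (N + 1) / (2 * N) <= 3/4).
  { split. apply Rdiv_lt_0_compat; lra.
    apply Rmult_le_reg_r with (2 * N); [lra|]. unfold Rdiv. rewrite Rmult_assoc, Rinv_l by lra. lra. }
  assert (Hy : 0 < (N + 1) / (N - 1)) by (apply Rdiv_lt_0_compat; lra).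
  assert (H2 : Rpower ((N + 1) / (N - 1)) ((N - 1) / 2) <= 3).
  { unfold Rpower. apply Rle_trans with (exp 1); [|apply exp_le_3].
    apply exp_le_mono.
    pose proof (ln_le_sub1 _ Hy).
    apply Rle_trans with ((N - 1) / 2 * ((N + 1) / (N - 1) - 1)).
    apply Rmult_le_compat_l; lra.
    right; field; lra. }
  assert (0 < Rpower ((N + 1) / (N - 1)) ((N - 1) / 2)) by apply exp_pos.
  split; [apply Rmult_lt_0_compat; lra|]. nra.
Qed.

Lemma bloch_pt (n : nat) (eps r : R) : (2 <= n)%nat -> 0 < eps <= 1 ->
  6 * INR n <= exp (eps * INR n / 4) -> 0 <= r < 1 ->
  (1 - r ^ 2) * (1/2 + B_const n * (1 - eps/2) * INR n * r ^ (n - 1)) <= 1.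
Proof.
  intros Hn He Hexp Hr.
  assert (HN : 2 <= INR n) by (replace 2 with (INR 2) by (simpl; lra); apply le_INR; lia).
  pose proof (B_bounds n Hn) as HB.
  pose proof (key_h n r Hn Hr) as Hk.
  assert (Hrp : 0 <= r ^ (n - 1)) by (apply pow_le; lra).
  set (B := B_const n) in *. set (N := INR n) in *. clearbody B. remember (r ^ (n - 1)) as P eqn:EP.
  destruct (Rle_dec (1 - r ^ 2) eps) as [Hc|Hc].
  - replace ((1 - r ^ 2) * (1/2 + B * (1 - eps/2) * N * P))
      with ((1 - r ^ 2) / 2 + (1 - eps/2) * (B * N * (1 - r ^ 2) * P)) by (unfold Rdiv; ring).
    assert ((1 - eps/2) * (B * N * (1 - r ^ 2) * P) <= (1 - eps/2) * 1)
      by (apply Rmult_le_compat_l; lra).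
    lra.
  - assert (Hr2 : r <= 1 - eps/2).
    { destruct (Rle_dec r (1 - eps/2)); auto. exfalso. apply Hc. nra. }
    assert (HP : P <= / (6 * N)).
    { rewrite EP. apply Rle_trans with ((1 - eps/2) ^ (n - 1)). apply pow_incr; lra.
      apply Rle_trans with (exp (- (eps/2)) ^ (n - 1)).
      apply pow_incr. pose proof (exp_ineq1_le (- (eps/2))). lra.
      rewrite <- Rpower_pow by apply exp_pos. unfold Rpower. rewrite ln_exp.
      rewrite minus_INR by lia. fold N. simpl INR.
      apply Rle_trans with (exp (- (eps * N / 4))).
      apply exp_le_mono. nra.
      rewrite exp_Ropp. apply Rinv_le_contravar; lra. }
    assert (HNP : N * P <= /6).
    { apply Rle_trans with (N * / (6 * N)). apply Rmult_le_compat_l; lra.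
      right; field; lra. }
    assert (HNP0 : 0 <= N * P) by nra.
    assert (H3 : B * (1 - eps/2) * N * P <= 1/2).
    { replace (B * (1 - eps/2) * N * P) with ((B * (1 - eps/2)) * (N * P)) by ring.
      apply Rle_trans with (3 * /6). apply Rmult_le_compat; nra. lra. }
    assert (H4 : 0 <= B * (1 - eps/2) * N * P).
    { replace (B * (1 - eps/2) * N * P) with ((B * (1 - eps/2)) * (N * P)) by ring.
      apply Rmult_le_pos; nra. }
    assert (0 <= 1 - r ^ 2 <= 1) by nra.
    nra.
Qed.
Lemma choose_N (t : R) : t < 1 -> exists N : nat, (2 <= N)%nat /\
  forall n : nat, (N <= n)%nat -> exists eps, 0 < eps <= 1 /\
    Rpower (INR n) t * eps <= 1/40 /\ 6 * INR n <= exp (eps * INR n / 4).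
Proof.
  intros ht.
  set (t' := Rmax t 0).
  assert (Ht' : t <= t' /\ 0 <= t' /\ t' < 1) by (unfold t'; unfold Rmax; destruct (Rle_dec t 0); lra).
  set (q := (1 - t') / 2).
  assert (Hq : 0 < q <= 1/2) by (unfold q; lra).
  destruct (INR_unbounded (1/q + 1)) as [K HK].
  assert (HK0 : 0 < INR K) by (assert (0 < 1/q) by (apply Rdiv_lt_0_compat; lra); lra).
  set (M := Rmax 40 (6 * (4 * INR K) ^ K)).
  assert (HM : 40 <= M /\ 6 * (4 * INR K) ^ K <= M) by (split; [apply Rmax_l|apply Rmax_r]).
  destruct (INR_unbounded (Rpower M (1/q))) as [N0 HN0].
  exists (Nat.max 2 N0). split; [lia|].
  intros n Hn.
  set (nr := INR n).
  assert (Hnr : 2 <= nr) by (unfold nr; replace 2 with (INR 2) by (simpl; lra); apply le_INR; lia).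
  assert (HnN0 : Rpower M (1/q) <= nr) by (unfold nr; left; apply Rlt_le_trans with (INR N0); [lra| apply le_INR; lia]).
  set (x := Rpower nr q).
  assert (Hx : M <= x).
  { unfold x. rewrite <- (Rpower_1 M) at 1 by lra.
    replace 1 with ((1/q) * q) by (field; lra). rewrite <- Rpower_mult.
    apply Rle_Rpower_l; [lra| split; [apply exp_pos|exact HnN0]]. }
  exists (Rpower nr (q - 1)).
  split; [split|split].
  - apply exp_pos.
  - apply Rle_trans with (Rpower nr 0); [apply Rle_Rpower; lra | rewrite Rpower_O; lra].
  - apply Rle_trans with (Rpower nr t' * Rpower nr (q - 1)).
    { apply Rmult_le_compat_r; [left; apply exp_pos|]. apply Rle_Rpower; lra. }
    rewrite <- Rpower_plus. replace (t' + (q - 1)) with (- q) by (unfold q; lra).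
    rewrite Rpower_Ropp. fold x.
    assert (0 < x) by lra.
    apply Rmult_le_reg_l with x; [lra|]. rewrite Rinv_r by lra. lra.
  - assert (Hex : Rpower nr (q - 1) * nr = x).
    { unfold x. rewrite <- (Rpower_1 nr) at 2 by lra. rewrite <- Rpower_plus. f_equal; lra. }
    rewrite Hex.
    set (c := 4 * INR K).
    assert (Hc : 0 < c) by (unfold c; lra).
    assert (E1 : exp (x / 4) = exp (x / c) ^ K).
    { rewrite <- Rpower_pow by apply exp_pos. unfold Rpower. rewrite ln_exp. f_equal. unfold c. field. lra. }
    rewrite E1.
    assert (Hx1 : 1 <= x) by lra.
    assert (E2 : (x / c) ^ K <= exp (x / c) ^ K).
    { apply pow_incr. split. { apply Rdiv_le_0_compat; lra. }
      pose proof (exp_ineq1_le (x / c)); lra. }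
    apply Rle_trans with ((x / c) ^ K); [|exact E2].
    unfold Rdiv. rewrite Rpow_mult_distr, pow_inv.
    assert (Hck : 0 < c ^ K) by (apply pow_lt; lra).
    assert (HxK : nr * x <= x ^ K).
    { rewrite <- Rpower_pow by lra.
      replace (INR K) with (1/q + (INR K - 1/q)) by ring.
      rewrite Rpower_plus.
      assert (Rpower x (1/q) = nr) as ->.
      { unfold x. rewrite Rpower_mult. replace (q * (1/q)) with 1 by (field; lra). apply Rpower_1; lra. }
      apply Rmult_le_compat_l; [lra|].
      rewrite <- (Rpower_1 x) at 1 by lra. apply Rle_Rpower; lra. }
    apply Rmult_le_reg_r with (c ^ K); [exact Hck|].
    replace (x ^ K * / c ^ K * c ^ K) with (x ^ K) by (field; lra).
    apply Rle_trans with (nr * x); [|exact HxK].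
    fold c in HM.
    assert (6 * c ^ K <= x) by lra.
    nra.
Qed.
Definition fz (n : nat) (a bb : R) (z : C) : C :=
  Cplus (Cmult (RtoC a) z) (Cmult (RtoC bb) (pow_n z n)).

Definition bcoef (n : nat) (a bb : R) (k : nat) : R :=
  if Nat.eqb k 1 then a else if Nat.eqb k n then bb else 0.

Lemma Cmod_pow_n (z : C) (k : nat) : Cmod (pow_n z k) = Cmod z ^ k.
Proof.
  induction k as [|k IH]; simpl.
  - apply Cmod_1.
  - change (Cmod (Cmult z (pow_n z k)) = Cmod z * Cmod z ^ k). rewrite Cmod_mult, IH. reflexivity.
Qed.

Lemma partial_sum (n : nat) (a bb : R) (z : C) : (2 <= n)%nat -> forall N : nat,
  sum_n (fun k => Cmult (RtoC (bcoef n a bb k)) (pow_n z k)) N =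
  Cplus (Cmult (RtoC (if Nat.leb 1 N then a else 0)) z)
        (Cmult (RtoC (if Nat.leb n N then bb else 0)) (pow_n z n)).
Proof.
  intros Hn N. induction N as [|N IH].
  - rewrite sum_O. unfold bcoef. simpl.
    destruct (Nat.eqb_spec 0 n) as [E|E]; [lia|].
    destruct n; [lia|]. simpl. change (Cmult (RtoC 0) (RtoC 1) = Cplus (Cmult (RtoC 0) z) (Cmult (RtoC 0) (pow_n z (S n)))). ring.
  - rewrite sum_Sn, IH. change plus with Cplus.
    unfold bcoef.
    destruct (Nat.eqb_spec (S N) 1) as [E1|E1].
    + assert (N = 0%nat) by lia. subst N. simpl.
      destruct (Nat.leb_spec n 0) as [|_]; [lia|]. destruct (Nat.leb_spec n 1) as [|_]; [lia|].
      change (Cplus (Cplus (Cmult (RtoC 0) z) (Cmult (RtoC 0) (pow_n z n))) (Cmult (RtoC a) (Cmult z (RtoC 1))) =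
        Cplus (Cmult (RtoC a) z) (Cmult (RtoC 0) (pow_n z n))). ring.
    + destruct (Nat.eqb_spec (S N) n) as [E2|E2].
      * subst n. destruct (Nat.leb_spec 1 N) as [|]; [|lia]. destruct (Nat.leb_spec 1 (S N)) as [|]; [|lia].
        destruct (Nat.leb_spec (S N) N) as [|_]; [lia|]. destruct (Nat.leb_spec (S N) (S N)) as [_|]; [|lia].
        change (Cplus (Cplus (Cmult (RtoC a) z) (Cmult (RtoC 0) (pow_n z (S N)))) (Cmult (RtoC bb) (pow_n z (S N))) =
          Cplus (Cmult (RtoC a) z) (Cmult (RtoC bb) (pow_n z (S N)))). ring.
      * destruct (Nat.leb_spec 1 N) as [|]; [|lia]. destruct (Nat.leb_spec 1 (S N)) as [|]; [|lia].
        assert (Hnn : Nat.leb n N = Nat.leb n (S N)).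
        { destruct (Nat.leb_spec n N); destruct (Nat.leb_spec n (S N)); auto; lia. }
        rewrite Hnn.
        change (Cplus (Cplus (Cmult (RtoC a) z) (Cmult (RtoC (if Nat.leb n (S N) then bb else 0)) (pow_n z n))) (Cmult (RtoC 0) (pow_n z (S N))) =
          Cplus (Cmult (RtoC a) z) (Cmult (RtoC (if Nat.leb n (S N) then bb else 0)) (pow_n z n))). ring.
Qed.

Lemma taylor (n : nat) (a bb : R) : (2 <= n)%nat -> has_taylor_coeffs (fz n a bb) (bcoef n a bb).
Proof.
  intros Hn z _. intros P HP. exists n. intros N HN.
  match goal with |- P ?x => assert (Ex : x = fz n a bb z) end.
  { etransitivity; [exact (partial_sum n a bb z Hn N)|].
    destruct (Nat.leb_spec 1 N) as [|]; [|lia]. destruct (Nat.leb_spec n N) as [|]; [|lia].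
    reflexivity. }
  rewrite Ex. apply locally_singleton. exact HP.
Qed.
Lemma nat_to_ring_C (n : nat) : @nat_to_ring C_Ring n = RtoC (INR n).
Proof.
  induction n as [|n IH].
  - reflexivity.
  - rewrite nat_to_ring_Sn, IH, S_INR. change (plus (RtoC (INR n)) one) with (Cplus (RtoC (INR n)) (RtoC 1)).
    rewrite <- RtoC_plus. reflexivity.
Qed.

Lemma is_derive_val {K : AbsRing} {V : NormedModule K} (f : K -> V) x (l1 l2 : V) :
  l1 = l2 -> is_derive f x l1 -> is_derive f x l2.
Proof. intros ->; auto. Qed.

Lemma fz_derive (n : nat) (a bb : R) (z : C) :
  @is_derive C_AbsRing C_NormedModule (fz n a bb) z
    (Cplus (RtoC a) (Cmult (RtoC (bb * INR n)) (pow_n z (pred n)))).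
Proof.
  assert (Hc : forall x y : C_AbsRing, mult x y = mult y x) by (intros; apply Cmult_comm).
  pose proof (@is_derive_mult C_AbsRing (fun _ => RtoC a) (fun x => x) z zero one
       (is_derive_const _ _) (is_derive_id _) Hc) as H1.
  pose proof (@is_derive_mult C_AbsRing (fun _ => RtoC bb) (fun x => pow_n x n) z zero _
       (is_derive_const _ _) (filterdiff_pow_n z n Hc) Hc) as H2.
  pose proof (is_derive_plus _ _ _ _ _ H1 H2) as H3.
  pose proof (@is_derive_scal_l C_AbsRing C_NormedModule _ _ _ (RtoC 1) H3) as H4.
  eapply is_derive_ext in H4.
  eapply is_derive_val; [|exact H4].
  - rewrite nat_to_ring_C. simpl. repeat (progress (unfold scal, plus, mult, zero, one; simpl)).
    rewrite RtoC_mult. change (@pow_n (AbsRing.Ring C_AbsRing)) with (@pow_n C_Ring). ring.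
  - intros t. unfold fz. repeat (progress (unfold scal, plus, mult, zero, one; simpl)). change (@pow_n (AbsRing.Ring C_AbsRing)) with (@pow_n C_Ring). ring.
Qed.

Lemma deriv_bound (n : nat) (a bb : R) (z : C) : (1 <= n)%nat -> 0 <= a -> 0 <= bb ->
  Cmod (Cplus (RtoC a) (Cmult (RtoC (bb * INR n)) (pow_n z (pred n))))
  <= a + bb * INR n * Cmod z ^ (n - 1).
Proof.
  intros Hn Ha Hb.
  eapply Rle_trans; [apply Cmod_triangle|].
  rewrite Cmod_mult, Cmod_pow_n, !Cmod_R.
  replace (pred n) with (n - 1)%nat by lia.
  rewrite (Rabs_pos_eq a Ha), Rabs_pos_eq. lra.
  apply Rmult_le_pos; [lra| apply pos_INR].
Qed.

Lemma sum_ge (h : nat -> R) (m : nat) : (forall k, 0 <= h k) -> (1 <= m)%nat ->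
  h 0%nat + h m <= sum_f_R0 h m.
Proof.
  intros Hh Hm. destruct m as [|m]; [lia|]. simpl.
  assert (h 0%nat <= sum_f_R0 h m).
  { clear Hm. induction m as [|m IH]; simpl; [lra|]. specialize (Hh (S m)). lra. }
  lra.
Qed.

Theorem theorem3p1 (t : R) (ht : t < 1) :
  exists N : nat, (2 <= N)%nat /\
    forall n : nat, (N <= n)%nat ->
      exists (f : C -> C) (b : nat -> R),
        analytic_on_disc f /\
        has_taylor_coeffs f b /\
        b 0%nat = 0 /\
        (forall k, 0 <= b k) /\
        f 0%C = 0%C /\
        Rbar_le (bloch_norm f) (Finite 1) /\
        F_tn t n b > Rpower (INR n) t * (B_const n) ^ 2.
Proof.
  destruct (choose_N t ht) as [N [HN2 HN]].
  exists N. split; [exact HN2|].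
  intros n Hn. destruct (HN n Hn) as [eps [He [Het Hexp]]].
  assert (Hn2 : (2 <= n)%nat) by lia.
  pose proof (B_bounds n Hn2) as HB.
  set (B := B_const n) in *.
  set (a := 1/2). set (bb := B * (1 - eps/2)).
  assert (Hbb : 0 <= bb) by (unfold bb; nra).
  exists (fz n a bb), (bcoef n a bb).
  split; [|split; [|split; [|split; [|split; [|split]]]]].
  - intros z _. eexists. apply fz_derive.
  - apply taylor; exact Hn2.
  - unfold bcoef. simpl. destruct n; [lia|reflexivity].
  - intros k. unfold bcoef. destruct (Nat.eqb k 1); [unfold a; lra|]. destruct (Nat.eqb k n); lra.
  - unfold fz. destruct n as [|n']; [lia|]. simpl.
    change (Cplus (Cmult (RtoC a) (RtoC 0)) (Cmult (RtoC bb) (Cmult (RtoC 0) (pow_n (RtoC 0) n'))) = RtoC 0). ring.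
  - unfold bloch_norm.
    assert (Hf0 : fz n a bb 0%C = 0%C).
    { unfold fz. destruct n as [|n']; [lia|]. simpl.
      change (Cplus (Cmult (RtoC a) (RtoC 0)) (Cmult (RtoC bb) (Cmult (RtoC 0) (pow_n (RtoC 0) n'))) = RtoC 0). ring. }
    rewrite Hf0, Cmod_0.
    set (E := fun r => _).
    assert (Hub : Rbar_le (Lub_Rbar E) (Finite 1)).
    { destruct (Lub_Rbar_correct E) as [_ Hl]. apply Hl.
      intros r [z [d [Hz [Hd ->]]]].
      pose proof (fz_derive n a bb z) as Hd0.
      assert (Edd : d = Cplus (RtoC a) (Cmult (RtoC (bb * INR n)) (pow_n z (pred n)))).
      { rewrite <- (is_C_derive_unique _ _ _ Hd). apply is_C_derive_unique. exact Hd0. }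
      subst d. simpl.
      assert (Hz0 : 0 <= Cmod z) by apply Cmod_ge_0.
      unfold in_disc in Hz.
      pose proof (deriv_bound n a bb z ltac:(lia) ltac:(unfold a; lra) Hbb) as Hdb.
      pose proof (bloch_pt n eps (Cmod z) Hn2 He Hexp (conj Hz0 Hz)) as Hbp.
      fold B in Hbp. fold a in Hbp.
      assert (H1 : 0 <= 1 - Cmod z ^ 2) by nra.
      apply Rle_trans with ((1 - Cmod z ^ 2) * (a + bb * INR n * Cmod z ^ (n - 1))).
      apply Rmult_le_compat_l; assumption.
      unfold bb. replace (B * (1 - eps / 2) * INR n) with (B * (1 - eps / 2) * INR n) by reflexivity.
      exact Hbp. }
    destruct (Lub_Rbar E) as [l| |]; simpl in *; auto. lra.
  - unfold F_tn, sum_f.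
    set (h := fun x : nat => Rpower (INR (x + 1)) t * Rabs (bcoef n a bb (x + 1)) ^ 2).
    assert (Hh : forall k, 0 <= h k).
    { intros k. unfold h. apply Rmult_le_pos; [left; apply exp_pos|].
      apply pow_le, Rabs_pos. }
    pose proof (sum_ge h (n - 1) Hh ltac:(lia)) as Hs.
    assert (Hh0 : h 0%nat = 1/4).
    { unfold h, bcoef. simpl. unfold Rpower. rewrite ln_1, Rmult_0_r, exp_0.
      unfold a. rewrite Rabs_pos_eq by lra. field. }
    assert (Hhn : h (n - 1)%nat = Rpower (INR n) t * bb ^ 2).
    { unfold h, bcoef. replace (n - 1 + 1)%nat with n by lia.
      destruct (Nat.eqb_spec n 1); [lia|]. rewrite Nat.eqb_refl.
      rewrite Rabs_pos_eq by exact Hbb. reflexivity. }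
    assert (HT : 0 < Rpower (INR n) t) by apply exp_pos.
    set (T := Rpower (INR n) t) in *.
    assert (Hgoal : T * B ^ 2 < 1/4 + T * bb ^ 2).
    { unfold bb.
      assert (T * B ^ 2 - T * (B * (1 - eps / 2)) ^ 2 = (T * eps) * (B ^ 2) * (1 - eps/4)) by field.
      assert (0 <= (T * eps) * (B ^ 2) * (1 - eps/4) <= (1/40) * 9 * 1).
      { assert (H0 : 0 <= T * eps) by (apply Rmult_le_pos; lra).
        assert (H1 : 0 <= B ^ 2) by (apply pow_le; lra).
        assert (H2 : B ^ 2 <= 9) by nra.
        assert (H3 : 0 <= T * eps * B ^ 2) by (apply Rmult_le_pos; lra).
        split. apply Rmult_le_pos; lra.
        apply Rmult_le_compat; [lra|lra| |lra]. apply Rmult_le_compat; lra. }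
      lra. }
    replace (n - 1)%nat with (n - 1)%nat in Hs by reflexivity.
    rewrite Hh0, Hhn in Hs. lra.
Qed.
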